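(* Let $G=(V,E)$ be any graph on $n\geq 1$ vertices. Then $F(G)\geq \lfloor (n-1)/2\rfloor$.
   Context: All graphs are finite and simple. Given a graph $G=(V,E)$ and a set $S\subseteq V$ of filled vertices, the color change rule is: if a filled vertex $v$ has exactly one unfilled neighbor $w$, then $w$ becomes filled. The derived set of $S$ is the set of filled vertices obtained after applying the rule until no further application is possible. $S$ is a zero forcing set if its derived set is $V$; otherwise $S$ is a failed zero forcing set. The failed zero forcing number $F(G)$ is the maximum size of a failed zero forcing set of $G$. *)

(* Defs.v *)
From mathcomp Require Import all_boot.
Set Implicit Arguments. Unset Strict Implicit. Unset Printing Implicit Defensive.

Definition simple_graph (T : finType) (e : rel T) : Prop :=
  symmetric e /\ irreflexive e.

(* Vertices that become filled by one (simultaneous) round of the color change rule: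
   w gets filled if some filled v adjacent to w has w as its only unfilled neighbor. *)
Definition force_step (T : finType) (e : rel T) (S : {set T}) : {set T} :=
  S :|: [set w | [exists v, [&& v \in S, e v w, w \notin S &
                    [forall u, (e v u && (u \notin S)) ==> (u == w)]]]].

(* Derived set: apply the rule until nothing changes (#|T| rounds always suffice,
   since the set grows strictly until it stabilizes). *)
Definition derived_set (T : finType) (e : rel T) (S : {set T}) : {set T} :=
  iter #|T| (force_step e) S.

Definition zero_forcing (T : finType) (e : rel T) (S : {set T}) : bool :=
  derived_set e S == [set: T].

Definition failed_zero_forcing (T : finType) (e : rel T) (S : {set T}) : bool :=
  ~~ zero_forcing e S.

Definition F_num (T : finType) (e : rel T) : nat :=
  \max_(S : {set T} | failed_zero_forcing e S) #|S|.

(* Main.v *)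
Require Import Defs.
From mathcomp Require Import all_boot zify.
Set Implicit Arguments. Unset Strict Implicit. Unset Printing Implicit Defensive.

Definition cnt (T : finType) (e : rel T) (F : {set T}) (z : T) := #|[set u in F | e z u]|.
Definition isfort (T : finType) (e : rel T) (X F : {set T}) :=
  [/\ F \subset X, F != set0 & forall z, z \in X :\: F -> cnt e F z != 1].

Lemma cntU1 (T : finType) (e : rel T) F a z :
  cnt e (a |: F) z = cnt e F z + ((a \notin F) && e z a).
Proof.
rewrite /cnt.
have ->: [set u in a |: F | e z u] =
   (if e z a then a |: [set u in F | e z u] else [set u in F | e z u]).
  apply/setP=> u; case: ifP => h; rewrite !inE; case: (eqVneq u a) => [->|] //=;
    rewrite ?h ?orbT ?andbT //= ?andbF //.
case: ifP => h; rewrite ?cardsU1 ?inE ?h ?andbT ?andbF; lia.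
Qed.

Lemma cardsU1_le (T : finType) (a : T) (A : {set T}) : #|a |: A| <= #|A| + 1.
Proof. by rewrite cardsU1 addnC leq_add2l leq_b1. Qed.

Lemma sum_ind_card (T : finType) (P b : pred T) :
  \sum_(a | P a) (b a : nat) = #|[set a | P a && b a]|.
Proof.
transitivity (\sum_(a | P a && b a) 1).
  by rewrite big_mkcondr; apply: eq_bigr => i _; case: (b i).
by rewrite -sum1_card; apply: eq_bigl => a; rewrite inE.
Qed.

Lemma leaf_lift (T : finType) (e : rel T) (X : {set T}) (l w : T) (F' : {set T}) :
  symmetric e -> l \in X -> w \in X -> l != w ->
  [set u in X | e l u] = [set w] ->
  isfort e (X :\ l :\ w) F' -> exists F, isfort e X F /\ #|F| <= #|F'| + 1.
Proof.
move=> esym lX wX lw Nl [sF nF cF].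
have eX: forall z, z \in X -> e l z = (z == w).
  move=> z zX; move/setP: Nl => /(_ z); rewrite !inE zX //.
have F'X: forall u, u \in F' -> [/\ u \in X, u != l & u != w].
  move=> u /(subsetP sF); rewrite !inE => /and3P [uw ul uX]; by [].
have sFX : F' \subset X.
  by apply/subsetP=> u /F'X [].
case: (posnP (cnt e F' w)) => [c0|cpos].
- exists F'; split; last lia. split => //.
  move=> z; rewrite inE => /andP [zF zX].
  case: (eqVneq z l) => [->|zl].
    rewrite /cnt; have ->: [set u in F' | e l u] = set0.
      apply/setP=> u; rewrite !inE; apply/negbTE; apply/negP=>/andP[uF].
      case/F'X: uF => uX _ uw. by rewrite eX // (negbTE uw).
    by rewrite cards0.
  case: (eqVneq z w) => [->|zw]; first by rewrite c0.
  apply: cF; by rewrite !inE zF zl zw zX.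
- exists (l |: F'); split; last by rewrite cardsU1; lia.
  have lF: l \notin F'. apply/negP=> /F'X [_ /eqP]; done.
  split.
  + by rewrite subUset sub1set lX.
  + by apply/set0Pn; exists l; rewrite !inE eqxx.
  + move=> z; rewrite !inE negb_or => /andP [/andP [zl zF] zX].
    rewrite cntU1 lF /=.
    case: (eqVneq z w) => [->|zw].
      rewrite esym eX // eqxx; lia.
    have ->: e z l = false by rewrite esym eX // (negbTE zw).
    rewrite addn0; apply: cF; by rewrite !inE zF zl zw zX.
Qed.

Lemma iso_fort (T : finType) (e : rel T) (X : {set T}) (v : T) :
  symmetric e -> v \in X -> #|[set u in X | e v u]| = 0 -> isfort e X [set v].
Proof.
move=> esym vX d0; split.
- by rewrite sub1set.
- by apply/set0Pn; exists v; rewrite inE.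
move=> z; rewrite !inE => /andP [zv zX]; rewrite /cnt.
have ->: [set u in [set v] | e z u] = set0.
  apply/setP=> u; rewrite !inE; apply/negbTE/negP => /andP[/eqP-> ezv].
  move/eqP: d0; rewrite cards_eq0 => /eqP/setP/(_ z); rewrite !inE zX esym ezv.
  by [].
by rewrite cards0.
Qed.

Definition merge (T : finType) (e : rel T) (x y : T) : rel T :=
  fun a b => (a != b) && [|| e a b, (a == x) && e y b | (b == x) && e a y].

Lemma merge_sym (T : finType) (e : rel T) x y : symmetric e -> symmetric (merge e x y).
Proof.
move=> es a b; rewrite /merge eq_sym (es b a) (es y a) (es b y).
by case: (a == x); case: (b == x); case: (e a b); case: (e a y); case: (e y b);
  rewrite /= ?andbT ?andbF ?orbT ?orbF.
Qed.

Lemma merge_irr (T : finType) (e : rel T) x y : irreflexive (merge e x y).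
Proof. by move=> a; rewrite /merge eqxx. Qed.

Lemma merge_lift (T : finType) (e : rel T) (X : {set T}) (v x y : T) (F'' : {set T}) :
  symmetric e -> irreflexive e -> v \in X ->
  [set u in X | e v u] = [set x; y] -> x != y ->
  isfort (merge e x y) (X :\ v :\ y) F'' -> exists F, isfort e X F /\ #|F| <= #|F''| + 1.
Proof.
move=> esym eirr vX Nv xy [sF nF cF].
have eV: forall z, z \in X -> e v z = (z == x) || (z == y).
  move=> z zX; move/setP: Nv => /(_ z); rewrite !inE zX //.
have /andP [xX evx]: (x \in X) && e v x.
  by move/setP: Nv => /(_ x); rewrite !inE eqxx.
have /andP [yX evy]: (y \in X) && e v y.
  by move/setP: Nv => /(_ y); rewrite !inE eqxx orbT.
have vx : v != x by apply/eqP=> vx; move: evx; rewrite -vx eirr.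
have vy : v != y by apply/eqP=> vy; move: evy; rewrite -vy eirr.
have F''X: forall u, u \in F'' -> [/\ u \in X, u != v & u != y].
  move=> u /(subsetP sF); rewrite !inE => /and3P [uy uv uX]; by [].
have sFX : F'' \subset X by apply/subsetP=> u /F''X [].
have yF : y \notin F'' by apply/negP=> /F''X [_ _ /eqP].
have vF : v \notin F'' by apply/negP=> /F''X [_ /eqP].
have Mz : forall z, z \notin F'' -> z != x ->
    [set u in F'' | merge e x y z u] = [set u in F'' | e z u || (u == x) && e z y].
  move=> z zF zx; apply/setP=> u; rewrite !inE /merge.
  case uF: (u \in F'') => //=.
  have -> : z != u by apply/negP=> /eqP zu; move: zF; rewrite zu uF.
  by rewrite (negbTE zx).
have cFz : forall z, z \in X -> z != v -> z != y -> z \notin F'' -> z != x ->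
    #|[set u in F'' | e z u || (u == x) && e z y]| != 1.
  move=> z zX zv zy zF zx; rewrite -Mz //; apply: cF; by rewrite !inE zF zX zv zy.
have cnt_v : [set u in F'' | e v u] = if x \in F'' then [set x] else set0.
  apply/setP=> u; rewrite !inE; case uF: (u \in F'') => /=.
    have uX : u \in X by case/F''X: uF.
    have uy : u != y by apply/eqP=> uy; move: yF; rewrite -uy uF.
    rewrite eV // (negbTE uy) orbF.
    case: ifP => xF; rewrite ?inE //.
    by apply/negbTE/eqP=> ux; move: xF; rewrite -ux uF.
  case: ifP => xF; rewrite ?inE //.
  by case: eqP => // ux; move: xF; rewrite -ux uF.
case: (boolP (x \in F'')) => xF.
- exists (y |: F''); split; last exact: cardsU1_le.
  split.
  + by rewrite subUset sub1set yX.
  + by apply/set0Pn; exists y; rewrite !inE eqxx.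
  + move=> z; rewrite !inE negb_or => /andP [/andP [zy zF] zX].
    rewrite cntU1 yF /=.
    case: (eqVneq z v) => [->|zv].
      by rewrite /cnt cnt_v xF cards1 evy.
    have zx : z != x by apply/eqP=> zx; move: zF; rewrite zx xF.
    have := cFz z zX zv zy zF zx.
    have -> : [set u in F'' | e z u || (u == x) && e z y] =
        if e z y then x |: [set u in F'' | e z u] else [set u in F'' | e z u].
      apply/setP=> u; case: ifP => h; rewrite !inE ?h ?andbT ?andbF ?orbF //.
      by case: (eqVneq u x) => [->|] /=; rewrite ?xF ?orbT ?orbF.
    rewrite /cnt; case: ifP => _ //=; last by rewrite addn0.
    rewrite cardsU1 addn1; case: (boolP (x \in [set u in F'' | e z u])) => xS /=.
      have: 0 < #|[set u in F'' | e z u]| by apply/card_gt0P; exists x.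
      by case: #|_|.
    by rewrite add1n.
- have Mx : [set u in F'' | merge e x y x u] = [set u in F'' | e x u || e y u].
    apply/setP=> u; rewrite !inE /merge eqxx /=.
    case uF: (u \in F'') => //=.
    have -> : x != u.
      by apply/eqP=> zu; move: xF; rewrite zu uF.
    have -> : (u == x) = false.
      by apply/negbTE/eqP=> zu; move: xF; rewrite -zu uF.
    by rewrite /= orbF.
  have cxy : #|[set u in F'' | e x u || e y u]| != 1.
    rewrite -Mx; apply: cF; rewrite !inE xF xX (negbTE xy) eq_sym vx //.
  have Ez : forall z, z \in X -> z != v -> z != y -> z \notin F'' -> z != x ->
      cnt e F'' z != 1.
    move=> z zX zv zy zF zx; have := cFz z zX zv zy zF zx.
    have -> // : [set u in F'' | e z u || (u == x) && e z y] = [set u in F'' | e z u].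
    apply/setP=> u; rewrite !inE; case: (eqVneq u x) => [->|]; rewrite ?(negbTE xF) //=.
    by rewrite orbF.
  case: (boolP ((cnt e F'' x != 1) && (cnt e F'' y != 1))) => [/andP [cx cy]|hc].
  + exists F''; split; last exact: leq_addr.
    split => //.
    move=> z; rewrite inE => /andP [zF zX].
    case: (eqVneq z v) => [->|zv]; first by rewrite /cnt cnt_v (negbTE xF) cards0.
    case: (eqVneq z y) => [->|zy] //.
    case: (eqVneq z x) => [->|zx] //.
    exact: Ez.
  + have sxy : forall a b, #|[set u in F'' | e a u]| = 0 ->
        [set u in F'' | e x u || e y u] = [set u in F'' | e b u] -> True by [].
    have cx0 : 0 < cnt e F'' x.
      rewrite lt0n; apply/negP=> /eqP cx0; move: hc cxy.
      have -> : [set u in F'' | e x u || e y u] = [set u in F'' | e y u].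
        apply/setP=> u; rewrite !inE; case uF: (u \in F'') => //=.
        case exu: (e x u) => //=; move/eqP: cx0; rewrite /cnt cards_eq0 => /eqP/setP/(_ u).
        by rewrite !inE uF exu.
      by rewrite /cnt in cx0 *; rewrite cx0 /= negbK => /eqP ->.
    have cy0 : 0 < cnt e F'' y.
      rewrite lt0n; apply/negP=> /eqP cy0; move: hc cxy.
      have -> : [set u in F'' | e x u || e y u] = [set u in F'' | e x u].
        apply/setP=> u; rewrite !inE; case uF: (u \in F'') => //=.
        case eyu: (e y u); rewrite ?orbT ?orbF //=; move/eqP: cy0; rewrite /cnt cards_eq0 => /eqP/setP/(_ u).
        by rewrite !inE uF eyu.
      by rewrite /cnt in cy0 *; rewrite cy0 /= andbT negbK => /eqP ->.
    exists (v |: F''); split; last exact: cardsU1_le.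
    split.
    * by rewrite subUset sub1set vX.
    * by apply/set0Pn; exists v; rewrite !inE eqxx.
    * move=> z; rewrite !inE negb_or => /andP [/andP [zv zF] zX].
      rewrite cntU1 vF /= esym eV //.
      case: (eqVneq z x) => [->|zx]; first by rewrite /= addn1; case: (cnt e F'' x) cx0.
      case: (eqVneq z y) => [->|zy]; first by rewrite orbT /= addn1; case: (cnt e F'' y) cy0.
      rewrite /= addn0; exact: Ez.
Qed.
Definition tA (T : finType) (e : rel T) (X A : {set T}) (a : T) :=
  #|[set u in X | e a u && ((a \in A) != (u \in A))]|.
Definition dsame (T : finType) (e : rel T) (X A : {set T}) (a : T) :=
  #|[set u in X | e a u && ((a \in A) == (u \in A))]|.
Definition Phi (T : finType) (e : rel T) (X A : {set T}) := \sum_(a in X) tA e X A a.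
Definition tog (T : finType) (A : {set T}) (v : T) := [set u | (u \in A) != (u == v)].

Lemma tog_ident (T : finType) (e : rel T) (X A : {set T}) (v : T) :
  symmetric e -> irreflexive e -> v \in X ->
  Phi e X (tog A v) + 2 * tA e X A v = Phi e X A + 2 * dsame e X A v.
Proof.
move=> es ei vX.
have togE : forall u, (u \in tog A v) = ((u \in A) != (u == v)) by move=> u; rewrite inE.
rewrite /Phi (bigD1 v vX) (bigD1 v vX) /=.
have h1 : tA e X (tog A v) v = dsame e X A v.
  rewrite /tA /dsame; apply: eq_card => u; rewrite !inE ?togE ?eqxx.
  case: (eqVneq u v) => [->|uv]; first by rewrite ei.
  by case: (v \in A); case: (u \in A).
pose Sa (B : {set T}) a := [set u in X | e a u && ((a \in B) != (u \in B))].
have h2 : forall a, a != v ->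
    tA e X (tog A v) a + (e a v && ((a \in A) != (v \in A))) =
    tA e X A a + (e a v && ((a \in A) == (v \in A))).
  move=> a av; rewrite /tA (cardsD1 v) (cardsD1 v [set u in X | _]).
  have -> : [set u in X | e a u && ((a \in tog A v) != (u \in tog A v))] :\ v =
            [set u in X | e a u && ((a \in A) != (u \in A))] :\ v.
    apply/setP=> u; rewrite !inE ?togE (negbTE av).
    by case: (eqVneq u v) => //= _; case: (a \in A); case: (u \in A).
  rewrite !inE ?togE vX (negbTE av) ?eqxx /=.
  case: (e a v) => //=; case: (a \in A); case: (v \in A) => /=; lia.
have h3 : \sum_(i in X | i != v) tA e X (tog A v) i +
          \sum_(i in X | i != v) (e i v && ((i \in A) != (v \in A)) : nat) =
          \sum_(i in X | i != v) tA e X A i +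
          \sum_(i in X | i != v) (e i v && ((i \in A) == (v \in A)) : nat).
  rewrite -!big_split /=; apply: eq_bigr => i /andP [_ iv]; exact: h2.
rewrite !sum_ind_card in h3.
have h4 : #|[set a | (a \in X) && (a != v) && (e a v && ((a \in A) != (v \in A)))]| = tA e X A v.
  rewrite /tA; apply: eq_card => u; rewrite !inE (es u v).
  case: (eqVneq u v) => [->|uv]; first by rewrite ei !andbF.
  by rewrite andbT; case: (v \in A); case: (u \in A); rewrite ?andbT ?andbF.
have h5 : #|[set a | (a \in X) && (a != v) && (e a v && ((a \in A) == (v \in A)))]| = dsame e X A v.
  rewrite /dsame; apply: eq_card => u; rewrite !inE (es u v).
  case: (eqVneq u v) => [->|uv]; first by rewrite ei !andbF.
  by rewrite andbT; case: (v \in A); case: (u \in A); rewrite ?andbT ?andbF.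
rewrite h4 h5 in h3; rewrite h1.
move: h3; set s1 := \sum_(i in X | i != v) _; set s2 := \sum_(i in X | i != v) _.
move: (tA e X A v) (dsame e X A v) => p q; lia.
Qed.

Lemma maxcut_fort (T : finType) (e : rel T) (X : {set T}) :
  symmetric e -> irreflexive e -> 0 < #|X| ->
  (forall v, v \in X -> 3 <= #|[set u in X | e v u]|) ->
  exists F, isfort e X F /\ 2 * #|F| <= #|X|.
Proof.
move=> es ei X0 deg3.
case: (@arg_maxnP _ set0 predT (Phi e X) isT) => A _ Amax.
have loc : forall v, v \in X -> dsame e X A v <= tA e X A v.
  move=> v vX; move: (tog_ident A es ei vX) (Amax (tog A v) isT).
  move: (Phi e X (tog A v)) (Phi e X A) (tA e X A v) (dsame e X A v) => a b c d.
  lia.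
have degsplit : forall v, v \in X -> #|[set u in X | e v u]| = dsame e X A v + tA e X A v.
  move=> v vX; rewrite -(cardsID [set u | (v \in A) == (u \in A)] [set u in X | e v u]).
  rewrite /dsame /tA; congr (_ + _); apply: eq_card => u; rewrite !inE;
    by case: (u \in X); case: (e v u); case: (v \in A); case: (u \in A).
have d2 : forall v, v \in X -> 2 <= tA e X A v.
  move=> v vX; move: (deg3 v vX) (degsplit v vX) (loc v vX).
  move: #|_| (dsame e X A v) (tA e X A v) => a b c; lia.
pose S b := [set u in X | (u \in A) == b].
have cS : forall b z, z \in X :\: S b -> cnt e (S b) z = tA e X A z.
  move=> b z; rewrite !inE => /andP [zb zX]; rewrite /cnt /tA; apply: eq_card => u; rewrite !inE.
  move: zb; rewrite zX /=; by case: (u \in X); case: (e z u); case: (z \in A); case: (u \in A); case: b.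
have sizes : #|S true| + #|S false| = #|X|.
  rewrite -(cardsID A X); congr (_ + _); apply: eq_card => u; rewrite !inE;
    by case: (u \in A); rewrite ?andbT ?andbF.
have ne : forall b, S b != set0.
  move=> b; case/card_gt0P: X0 => v vX.
  have : 0 < tA e X A v by apply: leq_trans (d2 v vX).
  case/card_gt0P => u; rewrite !inE => /andP [uX /andP [_ vu]].
  apply/set0Pn; case: (boolP ((v \in A) == b)) => vb; [exists v | exists u];
    rewrite !inE ?vX ?uX ?vb //=.
  by move: vu vb; case: (v \in A); case: (u \in A); case: b.
have fortS : forall b, isfort e X (S b).
  move=> b; split; first by apply/subsetP=> u; rewrite inE => /andP [].
    exact: ne.
  move=> z zS; rewrite cS //.
  have zX : z \in X by move: zS; rewrite inE => /andP [].
  by have := d2 z zX; case: (tA e X A z) => [|[|k]].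
case: (leqP #|S true| #|S false|) => h; [exists (S true) | exists (S false)];
  split => //; lia.
Qed.

Lemma half_arith n f : 3 <= n -> f <= (n - 2)./2 + 1 -> f + 1 <= n./2 + 1.
Proof. rewrite -!divn2 => h1 h2; lia. Qed.

Lemma fort_exists (T : finType) : forall n (e : rel T) (X : {set T}),
  symmetric e -> irreflexive e -> #|X| = n -> 0 < n ->
  exists F, isfort e X F /\ #|F| <= n./2 + 1.
Proof.
elim/ltn_ind => n IH e X es ei cX n0.
case: (leqP n 2) => [n2|n3].
  exists X; split; first split.
  - exact: subxx.
  - by rewrite -card_gt0 cX.
  - by move=> z; rewrite setDv inE.
  - by rewrite cX; case: n n0 n2 {IH cX} => [|[|[|]]].
case: (boolP [exists v in X, #|[set u in X | e v u]| <= 2]) =>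
    [/existsP [v /andP [vX dv]] | hall]; last first.
  have deg3 : forall v, v \in X -> 3 <= #|[set u in X | e v u]|.
    by move=> v vX; move/existsPn: hall => /(_ v); rewrite vX /= -ltnNge.
  have [F [fF h]] := maxcut_fort es ei (eq_ind_r (fun k => 0 < k) n0 cX) deg3.
  exists F; split => //; move: h; rewrite cX -divn2; move: #|F| => f; lia.
case d: #|[set u in X | e v u]| dv => [|[|[|k]]] // _.
- exists [set v]; split; first exact: iso_fort.
  by rewrite cards1 addnC leq_addr.
- move/eqP: d => /cards1P [w Nw].
  have /andP [wX evw] : (w \in X) && e v w by move/setP: Nw => /(_ w); rewrite !inE eqxx.
  have vw : v != w by apply/eqP=> vw; move: evw; rewrite -vw ei.
  have c2 : #|X :\ v :\ w| = n - 2.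
    move: cX; rewrite (cardsD1 v) (cardsD1 w (X :\ v)) !inE vX wX eq_sym vw /=.
    move=> <-; lia.
  have [F' [fF' hF']] := IH (n - 2) ltac:(lia) e (X :\ v :\ w) es ei c2 ltac:(lia).
  have [F [fF hF]] := leaf_lift es vX wX vw Nw fF'.
  exists F; split => //; apply: leq_trans hF _; exact: half_arith.
- move/eqP: d => /cards2P [x [y [xy Nv]]].
  have /andP [yX evy] : (y \in X) && e v y by move/setP: Nv => /(_ y); rewrite !inE eqxx orbT.
  have vy : v != y by apply/eqP=> vy; move: evy; rewrite -vy ei.
  have c2 : #|X :\ v :\ y| = n - 2.
    move: cX; rewrite (cardsD1 v) (cardsD1 y (X :\ v)) !inE vX yX eq_sym vy /=.
    move=> <-; lia.
  have [F' [fF' hF']] := IH (n - 2) ltac:(lia) (merge e x y) (X :\ v :\ y)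
     (merge_sym x y es) (merge_irr e x y) c2 ltac:(lia).
  have [F [fF hF]] := merge_lift es ei vX Nv xy fF'.
  exists F; split => //; apply: leq_trans hF _; exact: half_arith.
Qed.

Lemma stalled_fixed (T : finType) (e : rel T) (S : {set T}) :
  (forall v, v \in S -> #|[set u in ~: S | e v u]| != 1) -> force_step e S = S.
Proof.
move=> H; rewrite /force_step; apply/setUidPl/subsetP => w.
rewrite inE => /existsP [v /and4P [vS evw wS /forallP Hv]].
have : [set u in ~: S | e v u] = [set w].
  apply/setP=> u; rewrite !inE; apply/idP/idP.
    by move=> /andP [uS evu]; have := Hv u; rewrite evu uS.
  by move=> /eqP ->; rewrite wS evw.
by move=> E; move: (H v vS); rewrite E cards1.
Qed.

Theorem theorem5 (T : finType) (e : rel T) :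
  simple_graph e -> 1 <= #|T| -> (#|T|.-1)./2 <= F_num e.
Proof.
move=> [es ei] n1.
have [F [[sF nF cF] hF]] := fort_exists es ei (cardsT T) n1.
have Hst : force_step e (~: F) = ~: F.
  apply: stalled_fixed => v; rewrite inE => vF.
  have -> : [set u in ~: ~: F | e v u] = [set u in F | e v u].
    by apply/setP=> u; rewrite !inE negbK.
  by apply: cF; rewrite !inE vF.
have Hd : derived_set e (~: F) = ~: F.
  rewrite /derived_set; elim: #|T| => //= k ->; exact: Hst.
have Hf : failed_zero_forcing e (~: F).
  rewrite /failed_zero_forcing /zero_forcing Hd; apply/negP=> /eqP hC.
  move/negP: nF; apply; apply/eqP; by rewrite -[F]setCK hC setCT.
rewrite /F_num.
have := @leq_bigmax_cond _ (fun S => failed_zero_forcing e S) (fun S : {set T} => #|S|) _ Hf.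
move=> H; apply: leq_trans H.
have hc := cardsC F.
move: hF; rewrite -!divn2; move: #|F| #|~: F| hc => a b hc ha.
lia.
Qed.
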